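(* Let $\lambda$ be a nonzero real number and let $p$ be a positive integer. For any integer $n\ge1$, \[ \sum_{k=1}^{\infty}\frac{n\,H_{k,\lambda}^{(p)}}{\binom{k+n-1}{n}(k+n)}=\sum_{k=1}^{\infty}\frac{(-\lambda)^{k-1}(1)_{k,1/\lambda}}{(k-1)!\,k^{p}\binom{k+n-1}{n}}. \]
   Context: For real $x$ and $\mu\neq 0$, set $(x)_{0,\mu}=1$ and $(x)_{n,\mu}=x(x-\mu)\cdots(x-(n-1)\mu)$ for $n\ge1$. The degenerate higher-order harmonic numbers are $H_{0,\lambda}^{(k)}=0$ and $H_{n,\lambda}^{(k)}=\sum_{l=1}^{n}\frac{(-\lambda)^{l-1}(1)_{l,1/\lambda}}{l^{k}(l-1)!}$ for $n\ge1$. *)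

(* Defs.v *)
From Stdlib Require Import Reals Arith Factorial.
From Coquelicot Require Import Coquelicot.
Open Scope R_scope.

Fixpoint dfall (x mu : R) (n : nat) : R :=
  match n with
  | O => 1
  | S m => dfall x mu m * (x - INR m * mu)
  end.

Fixpoint dharm (lam : R) (k : nat) (n : nat) : R :=
  match n with
  | O => 0
  | S m => dharm lam k m
           + ((- lam) ^ m * dfall 1 (1 / lam) (S m))
             / (INR (S m) ^ k * INR (fact m))
  end.

(* Main.v *)
Require Import Defs.
From Stdlib Require Import Reals Arith Factorial Lia Lra.
From Coquelicot Require Import Coquelicot.
Open Scope R_scope.
Ltac rring := match goal with |- ?a = ?b => change (a = b :> R); ring end.

Lemma sumS (a : nat -> R) n : sum_n a (S n) = sum_n a n + a (S n).
Proof. rewrite sum_Sn. reflexivity. Qed.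
Lemma sum0 (a : nat -> R) : sum_n a 0 = a 0%nat.
Proof. apply sum_O. Qed.

Lemma abel (A B : nat -> R) K :
  sum_n (fun j => sum_n A j * (B j - B (S j))) K
  = sum_n (fun j => A j * B j) K - sum_n A K * B (S K).
Proof.
  induction K.
  - rewrite !sum0. rring.
  - rewrite !sumS, IHK. rring.
Qed.

Lemma Hmono (A : nat -> R) N (HA : forall j, (N <= j)%nat -> 0 <= A j) K M :
  (N <= K)%nat -> (K <= M)%nat -> sum_n A K <= sum_n A M.
Proof.
  intros HK HM. induction HM. lra.
  rewrite sumS. specialize (HA (S m)). assert (0 <= A (S m)) by (apply HA; lia). lra.
Qed.

Lemma ser_lim (a : nat -> R) l : is_series a l <-> is_lim_seq (sum_n a) l.
Proof. split; intro H; exact H. Qed.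

Section Key.
Variables (A B : nat -> R) (N : nat).
Hypothesis HA : forall j, (N <= j)%nat -> 0 <= A j.
Hypothesis HBpos : forall j, 0 <= B j.
Hypothesis HBdec : forall j, B (S j) <= B j.
Hypothesis HB0 : is_lim_seq B 0.

Let H := sum_n A.
Let E K := sum_n A K * B (S K).
Let f := fun j => sum_n A j * (B j - B (S j)).
Let g := fun j => A j * B j.

Lemma BS0 : is_lim_seq (fun K => B (S K)) 0.
Proof. apply (is_lim_seq_incr_1 B 0). exact HB0. Qed.

Lemma lowlim c : is_lim_seq (fun K => c * B (S K)) 0.
Proof.
  pose proof (is_lim_seq_scal_l _ c _ BS0). simpl in H0.
  replace 0 with (c * 0) by rring. exact H0.
Qed.

Lemma Elow K : (N <= K)%nat -> sum_n A N * B (S K) <= E K.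
Proof.
  intros HK. unfold E. apply Rmult_le_compat_r. apply HBpos. apply (Hmono A N HA); lia.
Qed.

Lemma tail1 K M : (N <= K)%nat -> (K <= M)%nat ->
  H K * (B (S K) - B (S M)) <= sum_n f M - sum_n f K.
Proof.
  intros HK HM. induction HM. unfold H; lra.
  rewrite (sumS f). unfold f at 2.
  assert (H K <= sum_n A (S m)) by (apply (Hmono A N HA); lia).
  assert (0 <= B (S m) - B (S (S m))) by (specialize (HBdec (S m)); lra).
  assert (H K * (B (S m) - B (S (S m))) <= sum_n A (S m) * (B (S m) - B (S (S m))))
    by (apply Rmult_le_compat_r; lra).
  lra.
Qed.

Lemma E1 (s : R) : is_lim_seq (sum_n f) s -> is_lim_seq E 0.
Proof.
  intros Hf.
  apply (is_lim_seq_le_le_loc (fun K => sum_n A N * B (S K)) E (fun K => s - sum_n f K)).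
  - exists N. intros K HK. split. apply Elow; lia.
    assert (Rbar_le (H K * B (S K)) (s - sum_n f K)).
    { apply (is_lim_seq_le_loc (fun M => H K * (B (S K) - B (S M))) (fun M => sum_n f M - sum_n f K)).
      - exists K. intros M HM. apply tail1; lia.
      - replace (H K * B (S K)) with (H K * (B (S K) - 0)) by rring.
        apply is_lim_seq_scal_l with (lu := Finite (B (S K) - 0)).
        apply is_lim_seq_minus'. apply is_lim_seq_const. apply BS0.
      - apply is_lim_seq_minus'. exact Hf. apply is_lim_seq_const. }
    simpl in H0. exact H0.
  - apply lowlim.
  - replace (Finite 0) with (Finite (s - s)) by (f_equal; ring).
    apply is_lim_seq_minus'. apply is_lim_seq_const. exact Hf.
Qed.

Lemma up2 M K : (N <= M)%nat -> (M <= K)%nat ->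
  (H K - H M) * B (S K) <= sum_n g K - sum_n g M.
Proof.
  intros HM HK. induction HK. lra.
  rewrite (sumS g). unfold H at 1. rewrite sumS. unfold g at 2.
  assert (H M <= H m) by (apply (Hmono A N HA); lia).
  assert (0 <= A (S m)) by (apply HA; lia).
  specialize (HBdec (S m)).
  assert ((H m - H M) * B (S (S m)) <= (H m - H M) * B (S m)) by (apply Rmult_le_compat_l; lra).
  assert (A (S m) * B (S (S m)) <= A (S m) * B (S m)) by (apply Rmult_le_compat_l; lra).
  unfold H in *. lra.
Qed.

Lemma E2 (s : R) : is_lim_seq (sum_n g) s -> is_lim_seq E 0.
Proof.
  intros Hg. apply is_lim_seq_spec. intros eps.
  apply is_lim_seq_spec in Hg.
  assert (He4 : 0 < eps / 4) by (destruct eps; simpl; lra).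
  destruct (Hg (mkposreal _ He4)) as [M0 HM0]. simpl in HM0.
  set (M := max N M0).
  pose proof (lowlim (H M)) as L1. apply is_lim_seq_spec in L1.
  destruct (L1 (mkposreal _ He4)) as [K1 HK1]. simpl in HK1.
  pose proof (lowlim (H N)) as L2. apply is_lim_seq_spec in L2.
  destruct (L2 (mkposreal _ He4)) as [K2 HK2]. simpl in HK2.
  exists (max M (max K1 K2)). intros K HK.
  assert (HMK : (M <= K)%nat) by lia.
  pose proof (up2 M K ltac:(lia) HMK).
  pose proof (Elow K ltac:(lia)).
  assert (Rabs (sum_n g M - s) < eps/4) by (apply HM0; lia).
  specialize (HM0 K ltac:(lia)).
  specialize (HK1 K ltac:(lia)). specialize (HK2 K ltac:(lia)).
  rewrite Rminus_0_r in HK1, HK2 |- *.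
  unfold E. fold H.
  apply Rabs_def1.
  - apply Rabs_def2 in HM0. apply Rabs_def2 in H2. apply Rabs_def2 in HK1. lra.
  - apply Rabs_def2 in HK2. fold H in H1. unfold E in H1. fold H in H1. lra.
Qed.

Lemma key (s : R) : is_series f s <-> is_series g s.
Proof.
  rewrite !ser_lim. split; intro Hs.
  - pose proof (E1 s Hs).
    apply (is_lim_seq_ext (fun K => sum_n f K + E K)).
    { intros K. unfold f, E. rewrite abel. fold g. rring. }
    replace (Finite s) with (Finite (s + 0)) by (f_equal; ring).
    apply is_lim_seq_plus'; assumption.
  - pose proof (E2 s Hs).
    apply (is_lim_seq_ext (fun K => sum_n g K - E K)).
    { intros K. unfold f, E. rewrite abel. fold g. rring. }
    replace (Finite s) with (Finite (s - 0)) by (f_equal; ring).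
    apply is_lim_seq_minus'; assumption.
Qed.
End Key.

Lemma Cpos m k : 0 < Binomial.C m k.
Proof.
  unfold Binomial.C. apply Rdiv_lt_0_compat. apply lt_0_INR, lt_O_fact.
  apply Rmult_lt_0_compat; apply lt_0_INR, lt_O_fact.
Qed.

Lemma Cstep j n : Binomial.C (S j + n) n = INR (S j + n) / INR (S j) * Binomial.C (j + n) n.
Proof.
  simpl (S j + n)%nat. rewrite pascal_step2 by lia.
  replace (S (j + n) - n)%nat with (S j) by lia. reflexivity.
Qed.

Definition BB n j := / Binomial.C (j + n) n.

Lemma BBS n j : BB n (S j) = BB n j * INR (S j) / INR (S j + n).
Proof.
  unfold BB. rewrite Cstep. pose proof (Cpos (j+n) n).
  assert (0 < INR (S j)) by (apply lt_0_INR; lia).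
  assert (0 < INR (S j + n)) by (apply lt_0_INR; lia).
  field. lra.
Qed.

Lemma BBpos n j : 0 < BB n j.
Proof. unfold BB. apply Rinv_0_lt_compat, Cpos. Qed.

Lemma BBdec n j : BB n (S j) <= BB n j.
Proof.
  rewrite BBS. pose proof (BBpos n j).
  assert (0 < INR (S j)) by (apply lt_0_INR; lia).
  assert (INR (S j) <= INR (S j + n)) by (apply le_INR; lia).
  unfold Rdiv. rewrite Rmult_assoc. rewrite <- (Rmult_1_r (BB n j)) at 2.
  apply Rmult_le_compat_l. lra.
  apply (Rmult_le_reg_r (INR (S j + n))). lra.
  rewrite Rmult_assoc, Rinv_l by lra. lra.
Qed.

Lemma BBle n j : (1 <= n)%nat -> BB n j <= / INR (S j).
Proof.
  intros hn. induction j.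
  - unfold BB. simpl (0 + n)%nat. rewrite C_n_n. simpl. lra.
  - rewrite BBS. pose proof (BBpos n j).
    assert (0 < INR (S j)) by (apply lt_0_INR; lia).
    assert (INR (S (S j)) <= INR (S j + n)) by (apply le_INR; lia).
    assert (0 < INR (S (S j))) by (apply lt_0_INR; lia).
    apply Rle_trans with (/ INR (S j) * INR (S j) / INR (S j + n)).
    + unfold Rdiv. apply Rmult_le_compat_r. left; apply Rinv_0_lt_compat; lra.
      apply Rmult_le_compat_r; lra.
    + rewrite Rinv_l by lra. unfold Rdiv. rewrite Rmult_1_l.
      apply Rinv_le_contravar; lra.
Qed.

Lemma BBlim n : (1 <= n)%nat -> is_lim_seq (BB n) 0.
Proof.
  intros hn.
  apply (is_lim_seq_le_le_loc (fun _ => 0) (BB n) (fun j => / INR (S j))).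
  - exists 0%nat. intros j _. split. left; apply BBpos. apply BBle; auto.
  - apply is_lim_seq_const.
  - replace (Finite 0) with (Rbar_inv p_infty) by reflexivity.
    apply is_lim_seq_inv. apply (is_lim_seq_incr_1 INR). apply is_lim_seq_INR.
    discriminate.
Qed.

Definition uu lam j := (- lam) ^ j * dfall 1 (1 / lam) (S j).
Definition AA lam p j := uu lam j / (INR (S j) ^ p * INR (fact j)).

Lemma dharm_sum lam p j : dharm lam p (S j) = sum_n (AA lam p) j.
Proof.
  induction j.
  - rewrite sum0. unfold AA, uu. cbn [dharm]. rewrite Rplus_0_l. reflexivity.
  - rewrite sumS, <- IHj. unfold AA, uu. cbn [dharm]. reflexivity.
Qed.

Lemma uuS lam j : lam <> 0 -> uu lam (S j) = uu lam j * (INR (S j) - lam).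
Proof.
  intros hl. unfold uu. change (dfall 1 (1/lam) (S (S j))) with
    (dfall 1 (1/lam) (S j) * (1 - INR (S j) * (1/lam))).
  simpl pow. field. auto.
Qed.

Lemma denpos p j : 0 < INR (S j) ^ p * INR (fact j).
Proof.
  apply Rmult_lt_0_compat. apply pow_lt, lt_0_INR; lia. apply lt_0_INR, lt_O_fact.
Qed.

Lemma sign lam p : lam <> 0 -> exists N,
  (forall j, (N <= j)%nat -> 0 <= AA lam p j) \/
  (forall j, (N <= j)%nat -> 0 <= - AA lam p j).
Proof.
  intros hl. destruct (INR_unbounded lam) as [N HN]. exists N.
  assert (Hpos : forall k, 0 < INR (S (N + k)) - lam).
  { intros k. assert (INR N <= INR (S (N + k))) by (apply le_INR; lia). lra. }
  destruct (Rle_or_lt 0 (uu lam N)) as [H0|H0].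
  - left. assert (forall k, 0 <= uu lam (N + k)).
    { induction k. rewrite Nat.add_0_r; auto.
      rewrite Nat.add_succ_r, uuS by auto. apply Rmult_le_pos; auto. left; apply Hpos. }
    intros j Hj. replace j with (N + (j - N))%nat by lia. unfold AA.
    apply Rdiv_le_0_compat; auto. apply denpos.
  - right. assert (forall k, uu lam (N + k) <= 0).
    { induction k. rewrite Nat.add_0_r; lra.
      rewrite Nat.add_succ_r, uuS by auto. specialize (Hpos k).
      assert (0 <= - uu lam (N + k) * (INR (S (N + k)) - lam)) by (apply Rmult_le_pos; lra).
      lra. }
    intros j Hj. replace j with (N + (j - N))%nat by lia. unfold AA.
    unfold Rdiv. rewrite Ropp_mult_distr_l. apply Rmult_le_pos.
    specialize (H (j - N)%nat). lra. left; apply Rinv_0_lt_compat, denpos.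
Qed.

Lemma sum_opp (a : nat -> R) K : sum_n (fun j => - a j) K = - sum_n a K.
Proof. induction K. rewrite !sum0; reflexivity. rewrite !sumS, IHK. rring. Qed.

Lemma ser_opp (a : nat -> R) s : is_series a s <-> is_series (fun j => - a j) (- s).
Proof.
  split; intro H.
  - apply (is_series_opp a s H).
  - replace s with (- - s) by rring.
    apply (is_series_ext (fun j => - - a j)). intros; rring.
    apply (is_series_opp _ _ H).
Qed.

Theorem theorem4 (lam : R) (p n : nat) (hlam : lam <> 0)
  (hp : (1 <= p)%nat) (hn : (1 <= n)%nat) (s : R) :
  is_series (fun j : nat =>
      INR n * dharm lam p (S j)
      / (Binomial.C (S j + n - 1) n * INR (S j + n))) s
  <->
  is_series (fun j : nat =>
      ((- lam) ^ (S j - 1) * dfall 1 (1 / lam) (S j))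
      / (INR (fact (S j - 1)) * INR (S j) ^ p * Binomial.C (S j + n - 1) n)) s.
Proof.
  assert (EL : forall j, INR n * dharm lam p (S j)
      / (Binomial.C (S j + n - 1) n * INR (S j + n))
      = sum_n (AA lam p) j * (BB n j - BB n (S j))).
  { intros j. rewrite dharm_sum, BBS. replace (S j + n - 1)%nat with (j + n)%nat by lia.
    unfold BB. pose proof (Cpos (j + n) n).
    assert (0 < INR (S j)) by (apply lt_0_INR; lia).
    assert (0 < INR (S j + n)) by (apply lt_0_INR; lia).
    rewrite plus_INR. rewrite plus_INR in H1. field. lra. }
  assert (ER : forall j, ((- lam) ^ (S j - 1) * dfall 1 (1 / lam) (S j))
      / (INR (fact (S j - 1)) * INR (S j) ^ p * Binomial.C (S j + n - 1) n)
      = AA lam p j * BB n j).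
  { intros j. replace (S j + n - 1)%nat with (j + n)%nat by lia.
    replace (S j - 1)%nat with j by lia. unfold AA, BB, uu.
    pose proof (Cpos (j + n) n). pose proof (denpos p j).
    assert (0 < INR (fact j)) by (apply lt_0_INR, lt_O_fact).
    assert (0 < INR (S j) ^ p) by (apply pow_lt, lt_0_INR; lia).
    field. repeat split; lra. }
  assert (Hiff : forall (a b : nat -> R), (forall j, a j = b j) ->
     is_series a s <-> is_series b s).
  { intros a b Hab. split; apply is_series_ext; intros; rewrite Hab; reflexivity. }
  rewrite (Hiff _ _ EL), (Hiff _ _ ER).
  destruct (sign lam p hlam) as [N [HA | HA]].
  - apply (key (AA lam p) (BB n) N HA (fun j => Rlt_le _ _ (BBpos n j)) (BBdec n) (BBlim n hn) s).
  - rewrite (ser_opp _ s), (ser_opp (fun j => AA lam p j * BB n j) s).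
    pose proof (key (fun j => - AA lam p j) (BB n) N HA (fun j => Rlt_le _ _ (BBpos n j)) (BBdec n) (BBlim n hn) (- s)) as K.
    split; intro H.
    + apply (is_series_ext (fun j => - AA lam p j * BB n j)). intros; rring.
      apply K. revert H. apply is_series_ext. intros j. rewrite sum_opp. rring.
    + apply (is_series_ext (fun j => sum_n (fun i => - AA lam p i) j * (BB n j - BB n (S j)))).
      intros; rewrite sum_opp; rring.
      apply K. revert H. apply is_series_ext. intros j. rring.
Qed.
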